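(* Let $(X,\mathrm{d})$ be a compact metric space and $f$ a bi-Lipschitz homeomorphism of $X$ such that $\mathrm{d}$ is $f$-hyperbolic. Then $f$ is Lipschitz-robustly expansive: there are $\epsilon,\delta>0$ such that every bi-Lipschitz homeomorphism $g$ of $(X,\mathrm{d})$ with $\mathrm{d}_L(f,g)<\epsilon$ is expansive with expansive constant $\delta$. Equivalently, every expansive homeomorphism of a compact metric space is Lipschitz-robustly expansive with respect to an $f$-hyperbolic metric.
   Context: A homeomorphism $g$ is expansive with expansive constant $\delta>0$ if $\mathrm{d}(g^n(x),g^n(y))\le\delta$ for all $n\in\mathbb Z$ implies $x=y$. A metric $\mathrm{d}$ defining the topology is $f$-hyperbolic if there are $\delta>0$, $\lambda>1$ such that $\mathrm{d}(x,y)<\delta$ implies $\max\{\mathrm{d}(f(x),f(y)),\mathrm{d}(f^{-1}(x),f^{-1}(y))\}\ge\lambda\,\mathrm{d}(x,y)$. $\mathrm{d}_{C^0}(f,g)=\max_{x}\mathrm{d}(f(x),g(x))+\max_x\mathrm{d}(f^{-1}(x),g^{-1}(x))$; $\mathrm{d}'_L(f,g)=\sup_{x\ne y}\left|\log\frac{\mathrm{d}(f(x),f(y))}{\mathrm{d}(g(x),g(y))}\right|$; $\mathrm{d}_L(f,g)=\mathrm{d}_{C^0}(f,g)+\mathrm{d}'_L(f,g)+\mathrm{d}'_L(f^{-1},g^{-1})$. *)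

(* Defs.v *)
From Stdlib Require Import Reals ZArith List.
Open Scope R_scope.

Section Defs.
Context {X : Type}.

Definition is_metric (d : X -> X -> R) : Prop :=
  (forall x y, 0 <= d x y) /\
  (forall x y, d x y = 0 <-> x = y) /\
  (forall x y, d x y = d y x) /\
  (forall x y z, d x z <= d x y + d y z).

Definition open_set (d : X -> X -> R) (U : X -> Prop) : Prop :=
  forall x, U x -> exists r, 0 < r /\ forall y, d x y < r -> U y.

Definition metric_compact (d : X -> X -> R) : Prop :=
  forall (I : Type) (U : I -> X -> Prop),
    (forall i, open_set d (U i)) ->
    (forall x, exists i, U i x) ->
    exists l : list I, forall x, exists i, In i l /\ U i x.

Definition bilipschitz_homeo (d : X -> X -> R) (f fi : X -> X) : Prop :=
  (forall x, fi (f x) = x) /\ (forall x, f (fi x) = x) /\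
  exists L, 0 < L /\
    (forall x y, d (f x) (f y) <= L * d x y) /\
    (forall x y, d (fi x) (fi y) <= L * d x y).

Definition f_hyperbolic (d : X -> X -> R) (f fi : X -> X) : Prop :=
  exists delta lambda, 0 < delta /\ 1 < lambda /\
    forall x y, d x y < delta ->
      Rmax (d (f x) (f y)) (d (fi x) (fi y)) >= lambda * d x y.

Definition ziter (g gi : X -> X) (n : Z) (x : X) : X :=
  match n with
  | Z0 => x
  | Zpos p => Nat.iter (Pos.to_nat p) g x
  | Zneg p => Nat.iter (Pos.to_nat p) gi x
  end.

Definition expansive_const (d : X -> X -> R) (g gi : X -> X) (delta : R) : Prop :=
  forall x y, (forall n : Z, d (ziter g gi n x) (ziter g gi n y) <= delta) -> x = y.

(* d_L(f,g) < eps, where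
   d_L(f,g) = max_x d(fx,gx) + max_x d(f^-1 x, g^-1 x)
             + sup_{x<>y} |log (d(fx,fy)/d(gx,gy))|
             + sup_{x<>y} |log (d(f^-1x,f^-1y)/d(g^-1x,g^-1y))|.
   A sum of suprema is < eps iff there are upper bounds of the four
   quantities whose sum is < eps. *)
Definition dL_lt (d : X -> X -> R) (f fi g gi : X -> X) (eps : R) : Prop :=
  exists a b c e, a + b + c + e < eps /\
    (forall x, d (f x) (g x) <= a) /\
    (forall x, d (fi x) (gi x) <= b) /\
    (forall x y, x <> y -> Rabs (ln (d (f x) (f y) / d (g x) (g y))) <= c) /\
    (forall x y, x <> y -> Rabs (ln (d (fi x) (fi y) / d (gi x) (gi y))) <= e).

End Defs.

(* Main.v *)
Require Import Defs.
From Stdlib Require Import Reals ZArith List.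
From Stdlib Require Import Lra Lia Psatz Classical.
Open Scope R_scope.

Lemma grow (u : nat -> R) mu B : 1 < mu -> 0 < u 0%nat -> u 1%nat >= mu * u 0%nat ->
  (forall k, Rmax (u (S (S k))) (u k) >= mu * u (S k)) -> (forall k, u k <= B) -> False.
Proof.
  intros Hmu H0 H1 Hs HB.
  assert (Ht : 0 < (mu - 1) * u 0%nat) by nra.
  assert (H: forall k, u (S k) >= mu * u k /\ u k >= u 0%nat + INR k * ((mu-1) * u 0%nat)).
  { induction k.
    - split; [assumption| simpl; lra].
    - destruct IHk as [A1 A2].
      assert (Hk := pos_INR k).
      assert (Hk0 : u k >= u 0%nat) by nra.
      assert (Hk1 : u (S k) > u k) by nra.
      assert (Hk2 : mu * u (S k) > u (S k)) by nra.
      split.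
      + specialize (Hs k). unfold Rmax in Hs. destruct Rle_dec; lra.
      + rewrite S_INR. nra. }
  destruct (INR_unbounded ((B - u 0%nat) / ((mu - 1) * u 0%nat))) as [n Hn].
  destruct (H n) as [_ Hn2]. specialize (HB n).
  assert (INR n * ((mu - 1) * u 0%nat) > B - u 0%nat).
  { apply Rmult_gt_compat_r with (r := (mu - 1) * u 0%nat) in Hn; [|lra].
    unfold Rdiv in Hn. rewrite Rmult_assoc, Rinv_l in Hn by lra. lra. }
  lra.
Qed.

Section Main.
Context {X : Type}.

Lemma ziter_pos (g gi : X -> X) k x : ziter g gi (Z.of_nat k) x = Nat.iter k g x.
Proof. destruct k; simpl; [reflexivity|]. rewrite SuccNat2Pos.id_succ. reflexivity. Qed.

Lemma ziter_neg (g gi : X -> X) k x : ziter g gi (- Z.of_nat k) x = Nat.iter k gi x.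
Proof. destruct k; simpl; [reflexivity|]. rewrite SuccNat2Pos.id_succ. reflexivity. Qed.

Lemma step (d : X -> X -> R) (f fi g gi : X -> X) lam delta c e :
  is_metric d -> (forall x, fi (f x) = x) -> (forall x, gi (g x) = x) ->
  (forall x y, d x y < delta -> Rmax (d (f x) (f y)) (d (fi x) (fi y)) >= lam * d x y) ->
  (forall x y, x <> y -> Rabs (ln (d (f x) (f y) / d (g x) (g y))) <= c) ->
  (forall x y, x <> y -> Rabs (ln (d (fi x) (fi y) / d (gi x) (gi y))) <= e) ->
  (forall p q, p <> q -> f p <> f q) -> (forall p q, p <> q -> fi p <> fi q) ->
  (forall p q, p <> q -> g p <> g q) -> (forall p q, p <> q -> gi p <> gi q) ->
  forall p q, d p q < delta -> 0 < lam ->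
    exp (Rmax c e) * Rmax (d (g p) (g q)) (d (gi p) (gi q)) >= lam * d p q.
Proof.
  intros [Dnn [Dz [Ds Dt]]] fK gK Hh Hc He iF iFi iG iGi p q Hpq Hlam.
  assert (HE : 0 < exp (Rmax c e)) by apply exp_pos.
  destruct (classic (p = q)) as [<-|Hne].
  { assert (d p p = 0) by (apply Dz; reflexivity). rewrite H.
    assert (0 <= Rmax (d (g p) (g p)) (d (gi p) (gi p))) by (eapply Rle_trans; [apply Dnn| apply Rmax_l]).
    nra. }
  assert (B : forall (F G : X -> X) C, (forall x, F (f x) = x \/ True) ->
     (forall x y, x <> y -> F x <> F y) -> (forall x y, x <> y -> G x <> G y) ->
     Rabs (ln (d (F p) (F q) / d (G p) (G q))) <= C -> C <= Rmax c e ->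
     d (F p) (F q) <= exp (Rmax c e) * d (G p) (G q)).
  { intros F G C _ jF jG Hab HC.
    assert (P1 : 0 < d (F p) (F q)).
    { destruct (Dnn (F p) (F q)) as [|H]; [assumption|]. exfalso. apply (jF p q Hne). apply Dz. auto. }
    assert (P2 : 0 < d (G p) (G q)).
    { destruct (Dnn (G p) (G q)) as [|H]; [assumption|]. exfalso. apply (jG p q Hne). apply Dz. auto. }
    set (r := d (F p) (F q) / d (G p) (G q)) in *.
    assert (Hr : 0 < r) by (unfold r; apply Rdiv_lt_0_compat; assumption).
    assert (ln r <= Rmax c e) by (apply Rle_trans with C; [apply Rle_trans with (Rabs (ln r)); [apply Rle_abs|]|]; assumption).
    assert (r <= exp (Rmax c e)).
    { rewrite <- (exp_ln r) by assumption. destruct (Rle_lt_or_eq_dec _ _ H) as [Hl|Hl];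
      [left; apply exp_increasing; assumption| rewrite Hl; lra]. }
    assert (d (F p) (F q) = r * d (G p) (G q)) by (unfold r; field; lra).
    rewrite H1. apply Rmult_le_compat_r; [lra|assumption]. }
  assert (B1 : d (f p) (f q) <= exp (Rmax c e) * d (g p) (g q)).
  { apply (B f g c); auto. apply Rmax_l. }
  assert (B2 : d (fi p) (fi q) <= exp (Rmax c e) * d (gi p) (gi q)).
  { apply (B fi gi e); auto. apply Rmax_r. }
  specialize (Hh p q Hpq).
  unfold Rmax in *. repeat destruct Rle_dec; nra.
Qed.
End Main.

Lemma divstep E M lam t : 0 < E -> E * M >= lam * t -> M >= lam / E * t.
Proof.
  intros HE H. replace (lam / E * t) with ((lam * t) / E) by (field; lra).
  apply Rle_ge. apply Rmult_le_reg_l with E; [lra|].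
  replace (E * (lam * t / E)) with (lam * t) by (field; lra). lra.
Qed.

Theorem mainTheorem6 (X : Type) (d : X -> X -> R) (f fi : X -> X) :
  is_metric d -> metric_compact d ->
  bilipschitz_homeo d f fi ->
  f_hyperbolic d f fi ->
  exists eps delta, 0 < eps /\ 0 < delta /\
    forall g gi : X -> X,
      bilipschitz_homeo d g gi ->
      dL_lt d f fi g gi eps ->
      expansive_const d g gi delta.
Proof.
  intros Hm _ Hf Hh.
  destruct Hh as [delta [lam [Hd [Hl Hhyp]]]].
  destruct Hf as [fK [fiK _]].
  assert (Hln : 0 < ln lam) by (rewrite <- ln_1; apply ln_increasing; lra).
  exists (ln lam), (delta / 2). split; [exact Hln|]. split; [lra|].
  intros g gi [gK [giK _]] [a [b [c [e [Hs [Ha [Hb [Hc He]]]]]]]] x y Hxy.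
  destruct (classic (x = y)) as [|Hne]; [assumption|]. exfalso.
  destruct Hm as [Dnn [Dz [Ds Dt]]] eqn:Hm'.
  assert (c0 : 0 <= c) by (eapply Rle_trans; [apply Rabs_pos| apply (Hc x y Hne)]).
  assert (e0 : 0 <= e) by (eapply Rle_trans; [apply Rabs_pos| apply (He x y Hne)]).
  assert (a0 : 0 <= a) by (eapply Rle_trans; [apply Dnn| apply (Ha x)]).
  assert (b0 : 0 <= b) by (eapply Rle_trans; [apply Dnn| apply (Hb x)]).
  assert (HM : Rmax c e < ln lam) by (unfold Rmax; destruct Rle_dec; lra).
  set (E := exp (Rmax c e)).
  assert (HE0 : 0 < E) by apply exp_pos.
  assert (HEl : E < lam) by (unfold E; rewrite <- (exp_ln lam) by lra; apply exp_increasing; exact HM).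
  set (mu := lam / E).
  assert (Hmu : 1 < mu).
  { unfold mu. apply Rmult_lt_reg_r with E; [lra|]. unfold Rdiv. rewrite Rmult_assoc, Rinv_l; lra. }
  assert (inj : forall (h hi : X -> X), (forall z, hi (h z) = z) -> forall p q, p <> q -> h p <> h q).
  { intros h hi hK p q Hpq E1. apply Hpq. rewrite <- (hK p), <- (hK q), E1. reflexivity. }
  assert (ST : forall p q, d p q < delta -> Rmax (d (g p) (g q)) (d (gi p) (gi q)) >= mu * d p q).
  { intros p q Hpq. apply divstep; [exact HE0|].
    apply (step d f fi g gi lam delta c e Hm fK gK Hhyp Hc He (inj f fi fK) (inj fi f fiK)
             (inj g gi gK) (inj gi g giK) p q Hpq). lra. }
  set (u := fun k => d (Nat.iter k g x) (Nat.iter k g y)).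
  set (v := fun k => d (Nat.iter k gi x) (Nat.iter k gi y)).
  assert (Hu : forall k, u k <= delta / 2).
  { intro k. unfold u. rewrite <- !(ziter_pos g gi). apply Hxy. }
  assert (Hv : forall k, v k <= delta / 2).
  { intro k. unfold v. rewrite <- !(ziter_neg g gi). apply Hxy. }
  assert (H0 : 0 < u 0%nat).
  { unfold u; simpl. destruct (Dnn x y) as [|H]; [assumption|]. exfalso. apply Hne. apply Dz. auto. }
  assert (Su : forall k, Rmax (u (S (S k))) (u k) >= mu * u (S k)).
  { intro k. unfold u. pose proof (ST (Nat.iter (S k) g x) (Nat.iter (S k) g y)) as T.
    simpl in T |- *. rewrite !gK in T. apply T.
    specialize (Hu (S k)). unfold u in Hu. simpl in Hu. lra. }
  assert (Sv : forall k, Rmax (v (S (S k))) (v k) >= mu * v (S k)).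
  { intro k. unfold v. pose proof (ST (Nat.iter (S k) gi x) (Nat.iter (S k) gi y)) as T.
    simpl in T |- *. rewrite !giK in T. rewrite Rmax_comm. apply T.
    specialize (Hv (S k)). unfold v in Hv. simpl in Hv. lra. }
  assert (S0 : Rmax (u 1%nat) (v 1%nat) >= mu * u 0%nat).
  { unfold u, v. simpl. apply ST. simpl in Hu. specialize (Hu 0%nat). unfold u in Hu. simpl in Hu. lra. }
  unfold Rmax in S0. destruct Rle_dec in S0.
  - apply (grow v mu (delta / 2)); auto.
  - apply (grow u mu (delta / 2)); auto; lra.
Qed.
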